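(* Let $X$ be a prelength space and $Y$ a metric space. For any $f\in\mathfrak{C}(X\to Y)$ and $x\in\mathfrak{C}(X)$, the function $\mathrm{ap}(f)(x)=\lambda\varepsilon.\,\mathrm{map}(f(\tfrac{\varepsilon}{2}))(x)(\tfrac{\varepsilon}{2})$ is a regular function over $Y$.
   Context: $\mathbb{Q}^+$ denotes the strictly positive rationals; all $\varepsilon,\delta$ (with indices) range over $\mathbb{Q}^+$. A metric space is a triple $(X,\asymp,B)$ where $\asymp$ is an equivalence relation on $X$ and $B$ assigns to each $\varepsilon\in\mathbb{Q}^+$ a binary relation $B_\varepsilon$ on $X$ respecting $\asymp$, such that: (1) each $B_\varepsilon$ is reflexive; (2) each $B_\varepsilon$ is symmetric; (3) if $B_{\varepsilon_1}(a,b)$ and $B_{\varepsilon_2}(b,c)$ then $B_{\varepsilon_1+\varepsilon_2}(a,c)$; (4) if $B_{\varepsilon+\delta}(a,b)$ for all $\delta$, then $B_\varepsilon(a,b)$; (5) if $B_\varepsilon(a,b)$ for all $\varepsilon$, then $a\asymp b$. A prelength space is a metric space such that for all $a,b,\varepsilon,\delta_1,\delta_2$ with $\varepsilon<\delta_1+\delta_2$ and $B_\varepsilon(a,b)$ there exists $c$ with $B_{\delta_1}(a,c)$ and $B_{\delta_2}(c,b)$. A regular function over a metric space $W$ is a function $x:\mathbb{Q}^+\to W$ such that $B_{\varepsilon_1+\varepsilon_2}(x(\varepsilon_1),x(\varepsilon_2))$ for all $\varepsilon_1,\varepsilon_2$; $\mathfrak{C}(W)$ is the metric space of regular functions with $x\asymp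 y$ iff $B_{2\varepsilon}(x(\varepsilon),y(\varepsilon))$ for all $\varepsilon$ and $B'_\varepsilon(x,y)$ iff $B_{\varepsilon+\delta_1+\delta_2}(x(\delta_1),y(\delta_2))$ for all $\delta_1,\delta_2$. A uniformly continuous function $g:X\to Y$ is a pair of a function and a modulus $\mu_g$ with $B^X_{\mu_g(\varepsilon)}(x_1,x_2)\Rightarrow B^Y_\varepsilon(g(x_1),g(x_2))$. $X\to Y$ is the metric space of uniformly continuous functions with $B_\varepsilon(g,h)$ iff $B^Y_\varepsilon(g(a),h(a))$ for all $a$, and $g\asymp h$ iff $g(a)\asymp h(a)$ for all $a$. $\mathrm{map}(g)(x)=\lambda\varepsilon.\,g(x(\mu_g(\varepsilon)))$. *)

(* Defs.v *)
From mathcomp Require Import all_boot all_order all_algebra.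
Set Implicit Arguments. Unset Strict Implicit. Unset Printing Implicit Defensive.
Import Order.TTheory GRing.Theory Num.Theory.
Local Open Scope ring_scope.

Definition Qpos := {q : rat | 0 < q}.

Definition qpadd (a b : Qpos) : Qpos :=
  exist _ (sval a + sval b) (addr_gt0 (proj2_sig a) (proj2_sig b)).

Lemma qphalf_gt0 (a : Qpos) : 0 < sval a / 2.
Proof. by rewrite divr_gt0 // (proj2_sig a). Qed.

Definition qphalf (a : Qpos) : Qpos := exist _ (sval a / 2) (qphalf_gt0 a).

Record MetricSpace := {
  ms_car :> Type;
  ms_eq : ms_car -> ms_car -> Prop;
  ms_ball : Qpos -> ms_car -> ms_car -> Prop;
  ms_eq_refl : forall a, ms_eq a a;
  ms_eq_sym : forall a b, ms_eq a b -> ms_eq b a;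
  ms_eq_trans : forall a b c, ms_eq a b -> ms_eq b c -> ms_eq a c;
  ms_ball_resp : forall e a a' b b', ms_eq a a' -> ms_eq b b' ->
      ms_ball e a b -> ms_ball e a' b';
  ms_ball_refl : forall e a, ms_ball e a a;
  ms_ball_sym : forall e a b, ms_ball e a b -> ms_ball e b a;
  ms_ball_triangle : forall e1 e2 a b c,
      ms_ball e1 a b -> ms_ball e2 b c -> ms_ball (qpadd e1 e2) a c;
  ms_ball_closed : forall e a b,
      (forall d, ms_ball (qpadd e d) a b) -> ms_ball e a b;
  ms_ball_eq : forall a b, (forall e, ms_ball e a b) -> ms_eq a b
}.

Arguments ms_eq {m}.
Arguments ms_ball {m}.

Definition prelength (X : MetricSpace) : Prop :=
  forall (a b : X) (e d1 d2 : Qpos), sval e < sval d1 + sval d2 ->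
    ms_ball e a b -> exists c : X, ms_ball d1 a c /\ ms_ball d2 c b.

Definition is_regular_for (T : Type) (ball : Qpos -> T -> T -> Prop)
  (x : Qpos -> T) : Prop :=
  forall e1 e2 : Qpos, ball (qpadd e1 e2) (x e1) (x e2).

Definition is_regular (W : MetricSpace) (x : Qpos -> W) : Prop :=
  is_regular_for (@ms_ball W) x.

Record UCFun (X Y : MetricSpace) := {
  ucf :> X -> Y;
  uc_mod : Qpos -> Qpos;
  uc_modP : forall (e : Qpos) (a b : X),
      ms_ball (uc_mod e) a b -> ms_ball e (ucf a) (ucf b)
}.

Definition uc_ball (X Y : MetricSpace) (e : Qpos) (g h : UCFun X Y) : Prop :=
  forall a : X, ms_ball e (g a) (h a).

Definition is_regular_uc (X Y : MetricSpace) (f : Qpos -> UCFun X Y) : Prop :=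
  is_regular_for (@uc_ball X Y) f.

Definition uc_map (X Y : MetricSpace) (g : UCFun X Y) (x : Qpos -> X) : Qpos -> Y :=
  fun e => g (x (uc_mod g e)).

Definition ap (X Y : MetricSpace) (f : Qpos -> UCFun X Y) (x : Qpos -> X) : Qpos -> Y :=
  fun e => uc_map (f (qphalf e)) x (qphalf e).

(* Main.v *)
Require Import Defs.
From mathcomp Require Import all_boot all_order all_algebra.
From mathcomp Require Import lra.
Import Order.TTheory GRing.Theory Num.Theory.
Local Open Scope ring_scope.

Lemma ball_eq_val (M : MetricSpace) (e e' : Qpos) (a b : M) :
  sval e = sval e' -> ms_ball e a b -> ms_ball e' a b.
Proof.
case: e => q p; case: e' => q' p' /= Hq; subst q'.
by rewrite (eq_irrelevance p p').
Qed.

Theorem theorem25 (X Y : MetricSpace) (HX : prelength X)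
  (f : Qpos -> UCFun X Y) (x : Qpos -> X) :
  is_regular_uc f -> is_regular x -> is_regular (ap f x).
Proof.
move=> Hf Hx e1 e2; rewrite /ap /uc_map.
set h1 := qphalf e1; set h2 := qphalf e2.
set g1 := f h1; set g2 := f h2.
set m1 := uc_mod g1 h1; set m2 := uc_mod g2 h2.
apply: ms_ball_closed => d.
set dl := qphalf (qphalf (uc_mod g2 d)).
have dpos : 0 < sval (uc_mod g2 d) := proj2_sig (uc_mod g2 d).
have e1pos : 0 < sval e1 := proj2_sig e1.
have e2pos : 0 < sval e2 := proj2_sig e2.
have H1 := Hx m1 dl.
have [c1 [Hc1a Hc1b]] : exists c, ms_ball m1 (x m1) c /\ ms_ball (qpadd dl dl) c (x dl).
  apply: (HX _ _ (qpadd m1 dl)) => //=. lra.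
have H2 := Hx dl m2.
have [c2 [Hc2a Hc2b]] : exists c, ms_ball (qpadd dl dl) (x dl) c /\ ms_ball m2 c (x m2).
  apply: (HX _ _ (qpadd dl m2)) => //=; lra.
have Hc12 : ms_ball (uc_mod g2 d) c1 c2.
  apply: ball_eq_val (ms_ball_triangle Hc1b Hc2a).
  rewrite /= /dl /=; lra.
have T1 : ms_ball h1 (g1 (x m1)) (g1 c1) by apply: uc_modP.
have T2 : ms_ball (qpadd h1 h2) (g1 c1) (g2 c1) by apply: Hf.
have T3 : ms_ball d (g2 c1) (g2 c2) by apply: uc_modP.
have T4 : ms_ball h2 (g2 c2) (g2 (x m2)) by apply: uc_modP.
apply: ball_eq_val (ms_ball_triangle (ms_ball_triangle (ms_ball_triangle T1 T2) T3) T4).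
rewrite /= /h1 /h2 /=; lra.
Qed.
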